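(* Let $n=p^2q^2$ with primes $3\le p<q$, and let $\mathcal{D}_{S_1},\mathcal{D}_{S_2}\subseteq\mathcal{D}_{[n]}\setminus\{n\}$ with $1\in\mathcal{D}_{S_1}\cap\mathcal{D}_{S_2}$. If $\mathrm{Spec}(\mathrm{ICG}(n,\mathcal{D}_{S_1}))=\mathrm{Spec}(\mathrm{ICG}(n,\mathcal{D}_{S_2}))$, then $\mathcal{D}_{S_1}=\mathcal{D}_{S_2}$.
   Context: Identify $\mathbb{Z}_n$ with $[n]=\{1,\dots,n\}$. For a divisor $d$ of $n$, $G_n(d)=\{j\in[n]:\gcd(j,n)=d\}$; $\mathcal{D}_{[n]}$ is the set of positive divisors of $n$. For $\mathcal{D}\subseteq\mathcal{D}_{[n]}\setminus\{n\}$, $\mathrm{ICG}(n,\mathcal{D})=\mathrm{Cay}(\mathbb{Z}_n,S)$ with $S=\bigcup_{d\in\mathcal{D}}G_n(d)$, and $\mathcal{D}=\mathcal{D}_S$. $\mathrm{Spec}$ is the multiset of adjacency eigenvalues. *)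

(* Defs.v *)
From mathcomp Require Import all_boot all_order all_algebra all_field.
Set Implicit Arguments. Unset Strict Implicit. Unset Printing Implicit Defensive.
Import GRing.Theory Num.Theory.
Local Open Scope ring_scope.

(* Z_n is represented by 'I_n = {0,...,n-1}; the element 0 plays the role of n
   in [n] = {1,...,n} (note gcd(0,n) = n = gcd(n,n)). *)

(* Adjacency matrix of ICG(n, D) = Cay(Z_n, S), S = U_{d in D} G_n(d):
   i ~ j  iff  (j - i mod n) in S  iff  gcd((j - i) mod n, n) in D. *)
Definition ICG_adj (n : nat) (D : seq nat) : 'M[algC]_n :=
  \matrix_(i < n, j < n)
    (if gcdn ((j + n - i) %% n) n \in D then 1 else 0).

Definition Spec (n : nat) (A : 'M[algC]_n) : algC -> nat :=
  fun x => mup x (char_poly A).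

Definition proper_divisor_set (n : nat) (D : seq nat) : Prop :=
  forall d, d \in D -> (d %| n)%N && (d != n).

(* Main.v *)
Require Import Defs.
From mathcomp Require Import all_boot all_order all_algebra all_field.
From mathcomp Require Import zify ssrZ ring.
From Stdlib Require ZArith Lia List Bool.
Module CP.
Import ZArith Lia List Bool.
Local Open Scope Z_scope.
Record P9 := mkP9 {c00:Z; c01:Z; c02:Z; c10:Z; c11:Z; c12:Z; c20:Z; c21:Z; c22:Z}.
Definition evalP (P:P9) (p q : Z) : Z :=
  c00 P + c01 P * q + c02 P * q^2 + c10 P * p + c11 P * p * q + c12 P * p * q^2
  + c20 P * p^2 + c21 P * p^2 * q + c22 P * p^2 * q^2.

Definition k00 (P:P9) : Z := 1 * (c00 P) + 5 * (c01 P) + 25 * (c02 P) + 3 * (c10 P) + 15 * (c11 P) + 75 * (c12 P) + 9 * (c20 P) + 45 * (c21 P) + 225 * (c22 P).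
Definition k01 (P:P9) : Z := 2 * (c01 P) + 20 * (c02 P) + 6 * (c11 P) + 60 * (c12 P) + 18 * (c21 P) + 180 * (c22 P).
Definition k02 (P:P9) : Z := 4 * (c02 P) + 12 * (c12 P) + 36 * (c22 P).
Definition k10 (P:P9) : Z := 2 * (c01 P) + 20 * (c02 P) + 2 * (c10 P) + 16 * (c11 P) + 110 * (c12 P) + 12 * (c20 P) + 78 * (c21 P) + 480 * (c22 P).
Definition k11 (P:P9) : Z := 8 * (c02 P) + 4 * (c11 P) + 64 * (c12 P) + 24 * (c21 P) + 312 * (c22 P).
Definition k12 (P:P9) : Z := 8 * (c12 P) + 48 * (c22 P).
Definition k20 (P:P9) : Z := 4 * (c02 P) + 4 * (c11 P) + 52 * (c12 P) + 4 * (c20 P) + 44 * (c21 P) + 376 * (c22 P).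
Definition k21 (P:P9) : Z := 16 * (c12 P) + 8 * (c21 P) + 176 * (c22 P).
Definition k22 (P:P9) : Z := 16 * (c22 P).
Definition k30 (P:P9) : Z := 8 * (c12 P) + 8 * (c21 P) + 128 * (c22 P).
Definition k31 (P:P9) : Z := 32 * (c22 P).
Definition k40 (P:P9) : Z := 16 * (c22 P).
Definition evalK (P:P9) (s t : Z) : Z := k00 P * s^0 * t^0 + k01 P * s^0 * t^1 + k02 P * s^0 * t^2 + k10 P * s^1 * t^0 + k11 P * s^1 * t^1 + k12 P * s^1 * t^2 + k20 P * s^2 * t^0 + k21 P * s^2 * t^1 + k22 P * s^2 * t^2 + k30 P * s^3 * t^0 + k31 P * s^3 * t^1 + k40 P * s^4 * t^0.
Lemma evalP_shift P s t : evalP P (3+2*s) (5+2*s+2*t) = evalK P s t.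
Proof. unfold evalP, evalK, k00, k01, k02, k10, k11, k12, k20, k21, k22, k30, k31, k40. ring. Qed.
Definition certpos (P:P9) : bool := (0 <? k00 P) && (0 <=? k01 P) && (0 <=? k02 P) && (0 <=? k10 P) && (0 <=? k11 P) && (0 <=? k12 P) && (0 <=? k20 P) && (0 <=? k21 P) && (0 <=? k22 P) && (0 <=? k30 P) && (0 <=? k31 P) && (0 <=? k40 P).
Definition certneg (P:P9) : bool := (k00 P <? 0) && (k01 P <=? 0) && (k02 P <=? 0) && (k10 P <=? 0) && (k11 P <=? 0) && (k12 P <=? 0) && (k20 P <=? 0) && (k21 P <=? 0) && (k22 P <=? 0) && (k30 P <=? 0) && (k31 P <=? 0) && (k40 P <=? 0).

Lemma tnn k s t a b : 0 <= k -> 0 <= s -> 0 <= t -> 0 <= k * s ^ a * t ^ b.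
Proof. intros. apply Z.mul_nonneg_nonneg; [apply Z.mul_nonneg_nonneg|]; try apply Z.pow_nonneg; lia. Qed.
Lemma tnp k s t a b : k <= 0 -> 0 <= s -> 0 <= t -> k * s ^ a * t ^ b <= 0.
Proof. intros. assert (0 <= (-k) * s ^ a * t ^ b) by (apply tnn; lia). lia. Qed.

Lemma certpos_sound P s t : certpos P = true -> 0 <= s -> 0 <= t -> 0 < evalK P s t.
Proof.
  unfold certpos; move=> H Hs Ht.
  move: H => /andP[/andP[/andP[/andP[/andP[/andP[/andP[/andP[/andP[/andP[/andP[Hk00 Hk01] Hk02] Hk10] Hk11] Hk12] Hk20] Hk21] Hk22] Hk30] Hk31] Hk40].
  apply Z.ltb_lt in Hk00.
  apply Z.leb_le in Hk01.
  apply Z.leb_le in Hk02.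
  apply Z.leb_le in Hk10.
  apply Z.leb_le in Hk11.
  apply Z.leb_le in Hk12.
  apply Z.leb_le in Hk20.
  apply Z.leb_le in Hk21.
  apply Z.leb_le in Hk22.
  apply Z.leb_le in Hk30.
  apply Z.leb_le in Hk31.
  apply Z.leb_le in Hk40.
  unfold evalK.
  pose proof (tnn _ s t 0 1 Hk01 Hs Ht).
  pose proof (tnn _ s t 0 2 Hk02 Hs Ht).
  pose proof (tnn _ s t 1 0 Hk10 Hs Ht).
  pose proof (tnn _ s t 1 1 Hk11 Hs Ht).
  pose proof (tnn _ s t 1 2 Hk12 Hs Ht).
  pose proof (tnn _ s t 2 0 Hk20 Hs Ht).
  pose proof (tnn _ s t 2 1 Hk21 Hs Ht).
  pose proof (tnn _ s t 2 2 Hk22 Hs Ht).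
  pose proof (tnn _ s t 3 0 Hk30 Hs Ht).
  pose proof (tnn _ s t 3 1 Hk31 Hs Ht).
  pose proof (tnn _ s t 4 0 Hk40 Hs Ht).
  rewrite !Z.pow_0_r !Z.mul_1_r.
  generalize dependent (k01 P * s ^ 0 * t ^ 1); intros.
  generalize dependent (k02 P * s ^ 0 * t ^ 2); intros.
  generalize dependent (k10 P * s ^ 1 * t ^ 0); intros.
  generalize dependent (k11 P * s ^ 1 * t ^ 1); intros.
  generalize dependent (k12 P * s ^ 1 * t ^ 2); intros.
  generalize dependent (k20 P * s ^ 2 * t ^ 0); intros.
  generalize dependent (k21 P * s ^ 2 * t ^ 1); intros.
  generalize dependent (k22 P * s ^ 2 * t ^ 2); intros.
  generalize dependent (k30 P * s ^ 3 * t ^ 0); intros.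
  generalize dependent (k31 P * s ^ 3 * t ^ 1); intros.
  generalize dependent (k40 P * s ^ 4 * t ^ 0); intros.
  generalize dependent (k00 P); intros.
  lia.
Qed.

Lemma certneg_sound P s t : certneg P = true -> 0 <= s -> 0 <= t -> evalK P s t < 0.
Proof.
  unfold certneg; move=> H Hs Ht.
  move: H => /andP[/andP[/andP[/andP[/andP[/andP[/andP[/andP[/andP[/andP[/andP[Hk00 Hk01] Hk02] Hk10] Hk11] Hk12] Hk20] Hk21] Hk22] Hk30] Hk31] Hk40].
  apply Z.ltb_lt in Hk00.
  apply Z.leb_le in Hk01.
  apply Z.leb_le in Hk02.
  apply Z.leb_le in Hk10.
  apply Z.leb_le in Hk11.
  apply Z.leb_le in Hk12.
  apply Z.leb_le in Hk20.
  apply Z.leb_le in Hk21.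
  apply Z.leb_le in Hk22.
  apply Z.leb_le in Hk30.
  apply Z.leb_le in Hk31.
  apply Z.leb_le in Hk40.
  unfold evalK.
  pose proof (tnp _ s t 0 1 Hk01 Hs Ht).
  pose proof (tnp _ s t 0 2 Hk02 Hs Ht).
  pose proof (tnp _ s t 1 0 Hk10 Hs Ht).
  pose proof (tnp _ s t 1 1 Hk11 Hs Ht).
  pose proof (tnp _ s t 1 2 Hk12 Hs Ht).
  pose proof (tnp _ s t 2 0 Hk20 Hs Ht).
  pose proof (tnp _ s t 2 1 Hk21 Hs Ht).
  pose proof (tnp _ s t 2 2 Hk22 Hs Ht).
  pose proof (tnp _ s t 3 0 Hk30 Hs Ht).
  pose proof (tnp _ s t 3 1 Hk31 Hs Ht).
  pose proof (tnp _ s t 4 0 Hk40 Hs Ht).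
  rewrite !Z.pow_0_r !Z.mul_1_r.
  generalize dependent (k01 P * s ^ 0 * t ^ 1); intros.
  generalize dependent (k02 P * s ^ 0 * t ^ 2); intros.
  generalize dependent (k10 P * s ^ 1 * t ^ 0); intros.
  generalize dependent (k11 P * s ^ 1 * t ^ 1); intros.
  generalize dependent (k12 P * s ^ 1 * t ^ 2); intros.
  generalize dependent (k20 P * s ^ 2 * t ^ 0); intros.
  generalize dependent (k21 P * s ^ 2 * t ^ 1); intros.
  generalize dependent (k22 P * s ^ 2 * t ^ 2); intros.
  generalize dependent (k30 P * s ^ 3 * t ^ 0); intros.
  generalize dependent (k31 P * s ^ 3 * t ^ 1); intros.
  generalize dependent (k40 P * s ^ 4 * t ^ 0); intros.
  generalize dependent (k00 P); intros.
  lia.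
Qed.

Definition eqP9 (P Q : P9) : bool :=
  (c00 P =? c00 Q) && (c01 P =? c01 Q) && (c02 P =? c02 Q) && (c10 P =? c10 Q) &&
  (c11 P =? c11 Q) && (c12 P =? c12 Q) && (c20 P =? c20 Q) && (c21 P =? c21 Q) &&
  (c22 P =? c22 Q).
Definition subP (P Q : P9) : P9 :=
  mkP9 (c00 P - c00 Q) (c01 P - c01 Q) (c02 P - c02 Q) (c10 P - c10 Q) (c11 P - c11 Q)
       (c12 P - c12 Q) (c20 P - c20 Q) (c21 P - c21 Q) (c22 P - c22 Q).

Definition Y := (bool * bool * bool * bool * bool * bool * bool)%type.
Definition yb (y : Y) (a b : nat) : bool :=
  match y with (b01, b02, b10, b11, b12, b20, b21) =>
  match a, b with
  | 0%nat, 0%nat => true | 0%nat, 1%nat => b01 | 0%nat, 2%nat => b02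
  | 1%nat, 0%nat => b10 | 1%nat, 1%nat => b11 | 1%nat, 2%nat => b12
  | 2%nat, 0%nat => b20 | 2%nat, 1%nat => b21 | _, _ => false end end.

Definition epsZ (a al : nat) : Z :=
  (if Nat.eqb al a then 1 else 0) - (if Nat.ltb a 2 && Nat.eqb al (S a) then 1 else 0).
Definition sum3 (f : nat -> Z) : Z := f 0%nat + f 1%nat + f 2%nat.
Definition ccoZ (y : Y) (al be : nat) : Z :=
  sum3 (fun a => sum3 (fun b => if yb y a b then epsZ a al * epsZ b be else 0)).
Definition cfZ (y : Y) (i j u w : nat) : Z :=
  if Nat.leb u i && Nat.leb w j then ccoZ y (Nat.sub 2 u) (Nat.sub 2 w) else 0.
Definition lamP (y : Y) (i j : nat) : P9 :=
  mkP9 (cfZ y i j 0 0) (cfZ y i j 0 1) (cfZ y i j 0 2) (cfZ y i j 1 0) (cfZ y i j 1 1)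
       (cfZ y i j 1 2) (cfZ y i j 2 0) (cfZ y i j 2 1) (cfZ y i j 2 2).

Definition specials : list P9 :=
  mkP9 0 0 1 0 0 0 0 (-1) 0 :: mkP9 0 0 (-1) 0 0 0 0 1 0 ::
  mkP9 0 1 0 0 0 0 (-1) 0 0 :: mkP9 0 (-1) 0 0 0 0 1 0 0 ::
  mkP9 3 (-3) 1 (-2) 2 0 0 (-1) 0 :: mkP9 (-3) 3 (-1) 2 (-2) 0 0 1 0 ::
  mkP9 0 (-1) 1 0 0 0 1 (-1) 0 :: mkP9 0 1 (-1) 0 0 0 (-1) 1 0 :: nil.

Definition E9 : list (nat * nat) :=
  ((0,0)::(0,1)::(0,2)::(1,0)::(1,1)::(1,2)::(2,0)::(2,1)::(2,2)::nil)%nat.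

Record K12 := mkK12 {xk00:Z; xk01:Z; xk02:Z; xk10:Z; xk11:Z; xk12:Z; xk20:Z; xk21:Z; xk22:Z; xk30:Z; xk31:Z; xk40:Z}.
Definition kv (P:P9) : K12 := mkK12 (k00 P) (k01 P) (k02 P) (k10 P) (k11 P) (k12 P) (k20 P) (k21 P) (k22 P) (k30 P) (k31 P) (k40 P).
Definition kpos (A B : K12) : bool := (xk00 B <? xk00 A) && (xk01 B <=? xk01 A) && (xk02 B <=? xk02 A) && (xk10 B <=? xk10 A) && (xk11 B <=? xk11 A) && (xk12 B <=? xk12 A) && (xk20 B <=? xk20 A) && (xk21 B <=? xk21 A) && (xk22 B <=? xk22 A) && (xk30 B <=? xk30 A) && (xk31 B <=? xk31 A) && (xk40 B <=? xk40 A).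
Definition kneg (A B : K12) : bool := (xk00 A <? xk00 B) && (xk01 A <=? xk01 B) && (xk02 A <=? xk02 B) && (xk10 A <=? xk10 B) && (xk11 A <=? xk11 B) && (xk12 A <=? xk12 B) && (xk20 A <=? xk20 B) && (xk21 A <=? xk21 B) && (xk22 A <=? xk22 B) && (xk30 A <=? xk30 B) && (xk31 A <=? xk31 B) && (xk40 A <=? xk40 B).
Lemma k00_sub P Q : k00 (subP P Q) = k00 P - k00 Q.
Proof. unfold k00, subP; cbv [c00 c01 c02 c10 c11 c12 c20 c21 c22]; ring. Qed.
Lemma k01_sub P Q : k01 (subP P Q) = k01 P - k01 Q.
Proof. unfold k01, subP; cbv [c00 c01 c02 c10 c11 c12 c20 c21 c22]; ring. Qed.
Lemma k02_sub P Q : k02 (subP P Q) = k02 P - k02 Q.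
Proof. unfold k02, subP; cbv [c00 c01 c02 c10 c11 c12 c20 c21 c22]; ring. Qed.
Lemma k10_sub P Q : k10 (subP P Q) = k10 P - k10 Q.
Proof. unfold k10, subP; cbv [c00 c01 c02 c10 c11 c12 c20 c21 c22]; ring. Qed.
Lemma k11_sub P Q : k11 (subP P Q) = k11 P - k11 Q.
Proof. unfold k11, subP; cbv [c00 c01 c02 c10 c11 c12 c20 c21 c22]; ring. Qed.
Lemma k12_sub P Q : k12 (subP P Q) = k12 P - k12 Q.
Proof. unfold k12, subP; cbv [c00 c01 c02 c10 c11 c12 c20 c21 c22]; ring. Qed.
Lemma k20_sub P Q : k20 (subP P Q) = k20 P - k20 Q.
Proof. unfold k20, subP; cbv [c00 c01 c02 c10 c11 c12 c20 c21 c22]; ring. Qed.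
Lemma k21_sub P Q : k21 (subP P Q) = k21 P - k21 Q.
Proof. unfold k21, subP; cbv [c00 c01 c02 c10 c11 c12 c20 c21 c22]; ring. Qed.
Lemma k22_sub P Q : k22 (subP P Q) = k22 P - k22 Q.
Proof. unfold k22, subP; cbv [c00 c01 c02 c10 c11 c12 c20 c21 c22]; ring. Qed.
Lemma k30_sub P Q : k30 (subP P Q) = k30 P - k30 Q.
Proof. unfold k30, subP; cbv [c00 c01 c02 c10 c11 c12 c20 c21 c22]; ring. Qed.
Lemma k31_sub P Q : k31 (subP P Q) = k31 P - k31 Q.
Proof. unfold k31, subP; cbv [c00 c01 c02 c10 c11 c12 c20 c21 c22]; ring. Qed.
Lemma k40_sub P Q : k40 (subP P Q) = k40 P - k40 Q.
Proof. unfold k40, subP; cbv [c00 c01 c02 c10 c11 c12 c20 c21 c22]; ring. Qed.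
Lemma kpos_cert P Q : kpos (kv P) (kv Q) = true -> certpos (subP P Q) = true.
Proof.
  unfold kpos, certpos, kv; cbv [xk00 xk01 xk02 xk10 xk11 xk12 xk20 xk21 xk22 xk30 xk31 xk40]; rewrite k00_sub k01_sub k02_sub k10_sub k11_sub k12_sub k20_sub k21_sub k22_sub k30_sub k31_sub k40_sub.
  move=> /andP[/andP[/andP[/andP[/andP[/andP[/andP[/andP[/andP[/andP[/andP[H00 H01] H02] H10] H11] H12] H20] H21] H22] H30] H31] H40].
  apply Z.ltb_lt in H00.
  apply Z.leb_le in H01.
  apply Z.leb_le in H02.
  apply Z.leb_le in H10.
  apply Z.leb_le in H11.
  apply Z.leb_le in H12.
  apply Z.leb_le in H20.
  apply Z.leb_le in H21.
  apply Z.leb_le in H22.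
  apply Z.leb_le in H30.
  apply Z.leb_le in H31.
  apply Z.leb_le in H40.
  repeat (apply andb_true_intro; split); first [apply Z.ltb_lt | apply Z.leb_le]; lia.
Qed.

Lemma kneg_cert P Q : kneg (kv P) (kv Q) = true -> certneg (subP P Q) = true.
Proof.
  unfold kneg, certneg, kv; cbv [xk00 xk01 xk02 xk10 xk11 xk12 xk20 xk21 xk22 xk30 xk31 xk40]; rewrite k00_sub k01_sub k02_sub k10_sub k11_sub k12_sub k20_sub k21_sub k22_sub k30_sub k31_sub k40_sub.
  move=> /andP[/andP[/andP[/andP[/andP[/andP[/andP[/andP[/andP[/andP[/andP[H00 H01] H02] H10] H11] H12] H20] H21] H22] H30] H31] H40].
  apply Z.ltb_lt in H00.
  apply Z.leb_le in H01.
  apply Z.leb_le in H02.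
  apply Z.leb_le in H10.
  apply Z.leb_le in H11.
  apply Z.leb_le in H12.
  apply Z.leb_le in H20.
  apply Z.leb_le in H21.
  apply Z.leb_le in H22.
  apply Z.leb_le in H30.
  apply Z.leb_le in H31.
  apply Z.leb_le in H40.
  repeat (apply andb_true_intro; split); first [apply Z.ltb_lt | apply Z.leb_le]; lia.
Qed.

Definition okk (l m : P9 * K12) : bool :=
  kpos (snd l) (snd m) || kneg (snd l) (snd m) || existsb (eqP9 (subP (fst l) (fst m))) specials.
Definition ent (y : Y) (e : nat * nat) : P9 * K12 := (lamP y (fst e) (snd e), kv (lamP y (fst e) (snd e))).
Definition tab (y : Y) : list (P9 * K12) := map (ent y) E9.
Definition witnessT (t1 t2 : list (P9 * K12)) : bool :=
  existsb (fun l => forallb (fun m => okk l m) t2) t1.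
Definition eqY (y1 y2 : Y) : bool :=
  match y1, y2 with (a1,a2,a3,a4,a5,a6,a7), (b1,b2,b3,b4,b5,b6,b7) =>
   eqb a1 b1 && eqb a2 b2 && eqb a3 b3 && eqb a4 b4 && eqb a5 b5 && eqb a6 b6 && eqb a7 b7 end.
Definition bl : list bool := true :: false :: nil.
Definition allY : list Y :=
  flat_map (fun a1 => flat_map (fun a2 => flat_map (fun a3 => flat_map (fun a4 =>
  flat_map (fun a5 => flat_map (fun a6 => map (fun a7 => (a1,a2,a3,a4,a5,a6,a7)) bl) bl) bl) bl) bl) bl) bl.
Definition allT : list (Y * list (P9 * K12)) := map (fun y => (y, tab y)) allY.
Definition checkAll : bool :=
  forallb (fun a => forallb (fun b => eqY (fst a) (fst b) || witnessT (snd a) (snd b) || witnessT (snd b) (snd a)) allT) allT.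
Lemma checkAll_ok : checkAll = true.
Proof. vm_compute. reflexivity. Qed.

Lemma evalP_sub P Q p q : evalP (subP P Q) p q = evalP P p q - evalP Q p q.
Proof. unfold evalP, subP; cbv [c00 c01 c02 c10 c11 c12 c20 c21 c22]; ring. Qed.

Lemma eqP9_eq P Q : eqP9 P Q = true -> P = Q.
Proof.
  destruct P, Q; unfold eqP9; simpl.
  move=> /andP[/andP[/andP[/andP[/andP[/andP[/andP[/andP[H1 H2] H3] H4] H5] H6] H7] H8] H9].
  apply Z.eqb_eq in H1; apply Z.eqb_eq in H2; apply Z.eqb_eq in H3; apply Z.eqb_eq in H4;
  apply Z.eqb_eq in H5; apply Z.eqb_eq in H6; apply Z.eqb_eq in H7; apply Z.eqb_eq in H8;
  apply Z.eqb_eq in H9; subst; reflexivity.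
Qed.

Lemma s3_nz p q : 3 <= p -> p + 2 <= q -> q * (q - 3 + 2 * p - p^2) - (2 * p - 3) = 0 -> False.
Proof.
  intros Hp Hq E.
  remember (q - 3 + 2 * p - p^2) as r eqn:Er.
  assert (r1 : 1 <= r) by nia.
  assert (r2 : r <= 1) by nia.
  assert (r = 1) by lia. subst r.
  assert (q = 2 * p - 3) by lia. subst q. nia.
Qed.

Lemma specials_nz s t S : 0 <= s -> 0 <= t -> (5+2 * s+2 * t) <> (3+2 * s)^2 ->
  In S specials -> evalP S (3+2 * s) (5+2 * s+2 * t) <> 0.
Proof.
  intros Hs Ht Hq HS.
  set (p := 3+2 * s) in *. set (q := 5+2 * s+2 * t) in *.
  assert (Hp : 3 <= p) by (unfold p; lia). assert (Hpq : p + 2 <= q) by (unfold p,q; lia).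
  clearbody p q.
  simpl in HS.
  repeat destruct HS as [<-|HS]; try contradiction; unfold evalP; cbv [c00 c01 c02 c10 c11 c12 c20 c21 c22]; intro H.
  - assert (q * (q - p^2) = 0) by (revert H; match goal with |- ?X = 0 -> _ => intro H; transitivity X; [ring|exact H] end).
    apply Z.mul_eq_0 in H0; lia.
  - assert ((-q) * (q - p^2) = 0) by (revert H; match goal with |- ?X = 0 -> _ => intro H; transitivity X; [ring|exact H] end).
    apply Z.mul_eq_0 in H0; lia.
  - lia.
  - lia.
  - apply (s3_nz p q Hp Hpq).
    revert H; match goal with |- ?X = 0 -> _ => intro H; transitivity X; [ring|exact H] end.
  - apply (s3_nz p q Hp Hpq).
    revert H; match goal with |- ?X = 0 -> _ => intro H; transitivity (-X); [ring|rewrite H; ring] end.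
  - assert ((q-1) * (q - p^2) = 0) by (revert H; match goal with |- ?X = 0 -> _ => intro H; transitivity X; [ring|exact H] end).
    apply Z.mul_eq_0 in H0; lia.
  - assert ((1-q) * (q - p^2) = 0) by (revert H; match goal with |- ?X = 0 -> _ => intro H; transitivity X; [ring|exact H] end).
    apply Z.mul_eq_0 in H0; lia.
Qed.

Lemma witnessT_eq t1 t2 : witnessT t1 t2 = existsb (fun l => forallb (fun m => okk l m) t2) t1.
Proof. reflexivity. Qed.
Lemma tab_eq y : tab y = map (ent y) E9.
Proof. reflexivity. Qed.
Lemma ent_eq y e : ent y e = (lamP y (fst e) (snd e), kv (lamP y (fst e) (snd e))).
Proof. reflexivity. Qed.
Lemma checkAll_eq : checkAll = forallb (fun a => forallb (fun b => eqY (fst a) (fst b) || witnessT (snd a) (snd b) || witnessT (snd b) (snd a)) allT) allT.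
Proof. reflexivity. Qed.

Lemma inallY y : In y allY.
Proof.
  destruct y as [[[[[[b1 b2] b3] b4] b5] b6] b7].
  assert (B : forall b : bool, In b bl) by (intros []; simpl; tauto).
  unfold allY.
  apply in_flat_map; exists b1; split; [apply B|].
  apply in_flat_map; exists b2; split; [apply B|].
  apply in_flat_map; exists b3; split; [apply B|].
  apply in_flat_map; exists b4; split; [apply B|].
  apply in_flat_map; exists b5; split; [apply B|].
  apply in_flat_map; exists b6; split; [apply B|].
  apply in_map_iff; exists b7; split; [reflexivity|apply B].
Qed.

Lemma eqY_eq y1 y2 : eqY y1 y2 = true -> y1 = y2.
Proof.
  destruct y1 as [[[[[[a1 a2] a3] a4] a5] a6] a7].
  destruct y2 as [[[[[[b1 b2] b3] b4] b5] b6] b7].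
  unfold eqY. move=> /andP[/andP[/andP[/andP[/andP[/andP[H1 H2] H3] H4] H5] H6] H7].
  apply eqb_prop in H1; apply eqb_prop in H2; apply eqb_prop in H3; apply eqb_prop in H4;
  apply eqb_prop in H5; apply eqb_prop in H6; apply eqb_prop in H7.
  subst; reflexivity.
Qed.

Section Sound.
Variables s t : Z.
Hypothesis Hs : 0 <= s.
Hypothesis Ht : 0 <= t.
Hypothesis Hq : 5+2 * s+2 * t <> (3+2 * s)^2.

Lemma okk_nz P Q : okk (P, kv P) (Q, kv Q) = true ->
  evalP P (3+2 * s) (5+2 * s+2 * t) <> evalP Q (3+2 * s) (5+2 * s+2 * t).
Proof.
  unfold okk; cbn [fst snd]. intros H E.
  assert (Z0 : evalP (subP P Q) (3+2 * s) (5+2 * s+2 * t) = 0) by (rewrite evalP_sub; lia).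
  rewrite evalP_shift in Z0.
  move: H => /orP[/orP[H|H]|H].
  - apply kpos_cert in H. pose proof (certpos_sound _ _ _ H Hs Ht). lia.
  - apply kneg_cert in H. pose proof (certneg_sound _ _ _ H Hs Ht). lia.
  - apply existsb_exists in H. destruct H as [S [HS HE]].
    apply eqP9_eq in HE. rewrite -evalP_shift HE in Z0.
    exact (specials_nz s t S Hs Ht Hq HS Z0).
Qed.

Definition covers (y1 y2 : Y) : Prop :=
  forall e, In e E9 -> exists f, In f E9 /\
    evalP (lamP y1 (fst e) (snd e)) (3+2 * s) (5+2 * s+2 * t) = evalP (lamP y2 (fst f) (snd f)) (3+2 * s) (5+2 * s+2 * t).

Lemma witness_false y1 y2 : covers y1 y2 -> witnessT (tab y1) (tab y2) = false.
Proof.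
  intro Hc. apply Bool.not_true_is_false. intro H.
  rewrite witnessT_eq in H. apply existsb_exists in H. destruct H as [l [Hl H]].
  rewrite tab_eq in Hl. apply in_map_iff in Hl. destruct Hl as [e [El He]]. subst l.
  destruct (Hc e He) as [f [Hf Ef]].
  pose proof (proj1 (forallb_forall _ _) H) as H'.
  assert (Hm : In (ent y2 f) (tab y2)) by (rewrite tab_eq; apply in_map; exact Hf).
  specialize (H' _ Hm). rewrite !ent_eq in H'.
  exact (okk_nz _ _ H' Ef).
Qed.

Lemma C_main y1 y2 : covers y1 y2 -> covers y2 y1 -> y1 = y2.
Proof.
  intros H12 H21.
  pose proof checkAll_ok as C. rewrite checkAll_eq in C.
  pose proof (proj1 (forallb_forall _ _) C) as C1.
  assert (I1 : In (y1, tab y1) allT) by (apply in_map_iff; exists y1; split; [reflexivity|apply inallY]).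
  assert (I2 : In (y2, tab y2) allT) by (apply in_map_iff; exists y2; split; [reflexivity|apply inallY]).
  specialize (C1 _ I1). cbv beta in C1.
  pose proof (proj1 (forallb_forall _ _) C1) as C2.
  specialize (C2 _ I2). cbv beta in C2. cbn [fst snd] in C2.
  rewrite (witness_false _ _ H12) (witness_false _ _ H21) !orb_false_r in C2.
  exact (eqY_eq _ _ C2).
Qed.
End Sound.

Lemma inE9 i j : Nat.leb i 2 = true -> Nat.leb j 2 = true -> In (i, j) E9.
Proof.
  intros Hi Hj; unfold E9.
  destruct i as [|[|[|i]]]; try discriminate; destruct j as [|[|[|j]]]; try discriminate; simpl; tauto.
Qed.

Lemma E9_le e : In e E9 -> Nat.leb (fst e) 2 = true /\ Nat.leb (snd e) 2 = true.
Proof.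
  unfold E9; simpl; intro H.
  repeat destruct H as [<-|H]; try contradiction; split; reflexivity.
Qed.

Lemma yb_expand y i j : Nat.leb i 2 = true -> Nat.leb j 2 = true ->
  Z.b2z (yb y i j) = sum3 (fun al => sum3 (fun be =>
     if Nat.leb al i && Nat.leb be j then ccoZ y al be else 0)).
Proof.
  destruct y as [[[[[[b1 b2] b3] b4] b5] b6] b7]. intros Hi Hj.
  destruct i as [|[|[|i]]]; try discriminate; destruct j as [|[|[|j]]]; try discriminate;
  destruct b1, b2, b3, b4, b5, b6, b7; reflexivity.
Qed.

Lemma evalP_expand P p q : evalP P p q =
  c00 P + c01 P * q + c02 P * (q * q) + c10 P * p + c11 P * p * q + c12 P * p * (q * q)
  + c20 P * (p * p) + c21 P * (p * p) * q + c22 P * (p * p) * (q * q).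
Proof. unfold evalP; ring. Qed.

Definition coversN (p q : nat) (y1 y2 : Y) : Prop :=
  forall e, In e E9 -> exists f, In f E9 /\
    evalP (lamP y1 (fst e) (snd e)) (Z.of_nat p) (Z.of_nat q) =
    evalP (lamP y2 (fst f) (snd f)) (Z.of_nat p) (Z.of_nat q).

Lemma C_final (p q k l : nat) (y1 y2 : Y) :
  p = (2 * k + 3)%nat -> q = (2 * l + 5)%nat -> (k <= l)%nat -> q <> (p * p)%nat ->
  coversN p q y1 y2 -> coversN p q y2 y1 -> y1 = y2.
Proof.
  move=> Hp Hq Hkl Hpp C12 C21.
  have Ep : Z.of_nat p = 3 + 2 * Z.of_nat k by rewrite Hp; lia.
  have Eq : Z.of_nat q = 5 + 2 * Z.of_nat k + 2 * Z.of_nat (l - k) by rewrite Hq; lia.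
  have Hs : 0 <= Z.of_nat k by lia.
  have Ht : 0 <= Z.of_nat (l - k) by lia.
  have Hq2 : 5 + 2 * Z.of_nat k + 2 * Z.of_nat (l - k) <> (3 + 2 * Z.of_nat k)^2.
  { rewrite -Ep -Eq Z.pow_2_r -Nat2Z.inj_mul => E. apply Hpp. by apply Nat2Z.inj. }
  apply (C_main (Z.of_nat k) (Z.of_nat (l - k)) Hs Ht Hq2).
  - move=> e He. rewrite -Ep -Eq. exact (C12 e He).
  - move=> e He. rewrite -Ep -Eq. exact (C21 e He).
Qed.

End CP.
Set Implicit Arguments. Unset Strict Implicit. Unset Printing Implicit Defensive.
Import GRing.Theory Num.Theory.
Section Arith.
Variables p q : nat.
Hypotheses (hp : prime p) (hq : prime q) (hpq : p != q).
Let n := (p ^ 2 * q ^ 2)%N.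
Let p_gt0 : (0 < p)%N := prime_gt0 hp.
Let q_gt0 : (0 < q)%N := prime_gt0 hq.
Lemma n_gt0 : (0 < n)%N.
Proof. by rewrite /n muln_gt0 !expn_gt0 p_gt0 q_gt0. Qed.

Lemma logn_pq r a b : prime r -> logn r (p ^ a * q ^ b) = (a * (r == p) + b * (r == q))%N.
Proof.
move=> hr; rewrite lognM ?expn_gt0 ?p_gt0 ?q_gt0 // !lognX !logn_prime //.
Qed.

Lemma logp_pq a b : logn p (p ^ a * q ^ b) = a.
Proof. by rewrite logn_pq // eqxx (negbTE hpq) muln1 muln0 addn0. Qed.
Lemma logq_pq a b : logn q (p ^ a * q ^ b) = b.
Proof. by rewrite logn_pq // eqxx eq_sym (negbTE hpq) muln1 muln0. Qed.

Lemma div_form d : (d %| n)%N -> d = (p ^ logn p d * q ^ logn q d)%N.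
Proof.
move=> dn; have d_gt0 : (0 < d)%N by apply: dvdn_gt0 dn; exact: n_gt0.
apply: eqn_from_log => //; first by rewrite muln_gt0 !expn_gt0 p_gt0 q_gt0.
move=> r; case: (boolP (prime r)) => hr; last first.
  by rewrite lognE (negbTE hr) /= [RHS]lognE (negbTE hr).
rewrite logn_pq //.
case: (eqVneq r p) => [->|rp]; first by rewrite ?eqxx ?(negbTE hpq) ?muln1 ?muln0 ?addn0.
case: (eqVneq r q) => [->|rq]; first by rewrite ?eqxx ?muln1 ?muln0.
rewrite ?(negbTE rp) ?(negbTE rq) !muln0; apply/eqP; rewrite -leqn0.
have := dvdn_leq_log r n_gt0 dn; rewrite /n logn_pq // ?(negbTE rp) ?(negbTE rq).
by rewrite !muln0.
Qed.

Lemma logp_le d : (d %| n)%N -> (logn p d <= 2)%N.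
Proof. by move=> dn; have := dvdn_leq_log p n_gt0 dn; rewrite /n logp_pq. Qed.

Lemma logq_le d : (d %| n)%N -> (logn q d <= 2)%N.
Proof. by move=> dn; have := dvdn_leq_log q n_gt0 dn; rewrite /n logq_pq. Qed.

Lemma gcd_dvd m : (gcdn m n %| n)%N.
Proof. exact: dvdn_gcdr. Qed.

Lemma dvd_logp m u : (u <= 2)%N -> (p ^ u %| m)%N = (u <= logn p (gcdn m n))%N.
Proof.
move=> hu; rewrite -pfactor_dvdn // ?gcdn_gt0 ?n_gt0 ?orbT // dvdn_gcd.
have -> : (p ^ u %| n)%N by rewrite /n dvdn_mulr // dvdn_exp2l.
by rewrite andbT.
Qed.

Lemma dvd_logq m u : (u <= 2)%N -> (q ^ u %| m)%N = (u <= logn q (gcdn m n))%N.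
Proof.
move=> hu; rewrite -pfactor_dvdn // ?gcdn_gt0 ?n_gt0 ?orbT // dvdn_gcd.
have -> : (q ^ u %| n)%N by rewrite /n dvdn_mull // dvdn_exp2l.
by rewrite andbT.
Qed.

Lemma cop a b : coprime (p ^ a) (q ^ b).
Proof. by rewrite coprimeXl // coprimeXr // prime_coprime // dvdn_prime2 // hpq. Qed.

Lemma dvd_pq m a b : (a <= 2)%N -> (b <= 2)%N ->
  (p ^ a * q ^ b %| m)%N = (a <= logn p (gcdn m n))%N && (b <= logn q (gcdn m n))%N.
Proof. by move=> ha hb; rewrite Gauss_dvd ?cop // dvd_logp // dvd_logq. Qed.



End Arith.

Local Open Scope ring_scope.
Lemma sum_mult (F : nat -> algC) t M : (0 < t)%N ->
  \sum_(m < t * M) (if (t %| m)%N then F m else 0) = \sum_(j < M) F (t * j)%N.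
Proof.
move=> t_gt0; elim: M => [|M IH]; first by rewrite muln0 !big_ord0.
rewrite big_ord_recr /= -IH -!(big_mkord xpredT (fun m => if (t %| m)%N then F m else 0)).
rewrite (big_cat_nat _ (n := (t * M)%N)) //=; last by rewrite leq_mul2l leqnSn orbT.
congr (_ + _).
rewrite mulnS addnC big_ltn; last by lia.
rewrite dvdn_mulr // big1_seq ?addr0 //.
move=> i /andP [_]; rewrite mem_index_iota => /andP [h1 h2].
have -> : i = (t * M + (i - t * M))%N by lia.
rewrite dvdn_addr ?dvdn_mulr // gtnNdvd //; lia.
Qed.

Lemma geom_sum (z : algC) (N : nat) : z ^+ N = 1 ->
  \sum_(k < N) z ^+ k = if z == 1 then N%:R else 0.
Proof.
move=> zN; case: eqP => [->|/eqP z1].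
  by rewrite (eq_bigr (fun _ => 1)) ?sumr_const ?card_ord // => k _; rewrite expr1n.
have := GRing.subrX1 z N; rewrite zN subrr => /esym/eqP; rewrite mulf_eq0 subr_eq0.
by rewrite (negbTE z1) /= => /eqP.
Qed.

Lemma Tsum n (w : algC) (hw : n.-primitive_root w) t k : (0 < t)%N -> (t %| n)%N ->
  \sum_(m < n) (if (t %| m)%N then w ^+ (m * k) else 0) =
  if (n %| t * k)%N then (n %/ t)%:R else 0.
Proof.
move=> t_gt0 tn.
have E : n = (t * (n %/ t))%N by rewrite mulnC divnK.
rewrite -(big_mkord xpredT (fun m => if (t %| m)%N then w ^+ (m * k) else 0)).
rewrite {1}E big_mkord (sum_mult (fun m => w ^+ (m * k))) //.
under eq_bigr do rewrite mulnAC exprM.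
rewrite geom_sum; last first.
  by rewrite -exprM mulnAC -E exprM (prim_expr_order hw) expr1n.
by rewrite -(prim_order_dvd hw).
Qed.
Section Circ.
Variables (n : nat) (w : algC).
Hypothesis hw : n.-primitive_root w.
Let n_gt0 : (0 < n)%N := prim_order_gt0 hw.
Let wn : w ^+ n = 1 := prim_expr_order hw.

Lemma rot_sum (G : nat -> algC) : (forall x, G (x + n)%N = G x) ->
  forall c, \sum_(i < n) G (c + i)%N = \sum_(i < n) G i.
Proof.
move=> hG; elim=> [|c IH]; first by apply: eq_bigr => i _; rewrite add0n.
rewrite -IH; move: n_gt0 hG; case: n => [//|m] _ hG.
rewrite big_ord_recr big_ord_recl /= addn0 addSnnS hG addrC; congr (_ + _).
by apply: eq_bigr => i _; rewrite /bump /= add1n addSnnS.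
Qed.

Lemma refl_sum (G : nat -> algC) : (forall x, G (x + n)%N = G x) ->
  forall j, \sum_(i < n) G (j + n - i)%N = \sum_(i < n) G i.
Proof.
move=> hG j; rewrite (reindex_inj rev_ord_inj) /= -(rot_sum hG j.+1).
apply: eq_bigr => i _; congr G.
have hi := ltn_ord i; rewrite /= subnBA //; lia.
Qed.


Lemma wexpn x k : w ^+ ((x + n) * k) = w ^+ (x * k).
Proof. by rewrite mulnDl exprD [w ^+ (n * k)]exprM wn expr1n mulr1. Qed.

Variable a : nat -> algC.
Hypothesis ha : forall x, a (x + n)%N = a x.

Definition Amat : 'M[algC]_n := \matrix_(i < n, j < n) a (j + n - i)%N.
Definition lam (k : nat) : algC := \sum_(m < n) a m * w ^+ (m * k).
Definition rv (k : nat) : 'rV[algC]_n := \row_j w ^+ ((n - j) * k).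
Definition cv (k : nat) : 'cV[algC]_n := \col_i w ^+ (i * k).

Let Gp k : forall x, a (x + n)%N * w ^+ ((x + n) * k) = a x * w ^+ (x * k).
Proof. by move=> x; rewrite ha wexpn. Qed.

Lemma row_eig k : rv k *m Amat = lam k *: rv k.
Proof.
apply/rowP => j; rewrite !mxE.
under eq_bigr do rewrite !mxE.
have E : forall i : 'I_n, w ^+ ((n - i) * k) * a (j + n - i)%N =
   a (j + n - i)%N * w ^+ ((j + n - i) * k) * w ^+ ((n - j) * k).
  move=> i; rewrite -mulrA -exprD -mulnDl mulrC.
  have -> : ((j + n - i) + (n - j) = (n - i) + n)%N.
    by have := ltn_ord i; have := ltn_ord j; lia.
  by rewrite wexpn.
rewrite (eq_bigr _ (fun i _ => E i)) -mulr_suml.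
by rewrite (refl_sum (Gp k)).
Qed.

Lemma col_eig k : Amat *m cv k = lam k *: cv k.
Proof.
apply/colP => i; rewrite !mxE.
under eq_bigr do rewrite !mxE.
have E : forall j : 'I_n, a (j + n - i)%N * w ^+ (j * k) =
   a ((n - i) + j)%N * w ^+ (((n - i) + j) * k) * w ^+ (i * k).
  move=> j; rewrite -mulrA -exprD -mulnDl.
  have -> : ((n - i) + j + i = j + n)%N by have := ltn_ord i; lia.
  have -> : (j + n - i = (n - i) + j)%N by have := ltn_ord i; lia.
  by rewrite wexpn.
rewrite (eq_bigr _ (fun i _ => E i)) -mulr_suml.
by rewrite (rot_sum (Gp k)) mulrC.
Qed.

Lemma rv_neq0 k : rv k != 0.
Proof.
apply/eqP => /rowP/(_ (Ordinal n_gt0)); rewrite !mxE => /eqP.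
by rewrite expf_eq0 (prim_root_eq0 hw) eqn0Ngt n_gt0 andbF.
Qed.

Lemma lam_eig k : eigenvalue Amat (lam k).
Proof. by apply/eigenvalueP; exists (rv k); [exact: row_eig | exact: rv_neq0]. Qed.

Lemma orth (i l : 'I_n) : \sum_(k < n) w ^+ ((i + n - l) * k) = if i == l then n%:R else 0.
Proof.
under eq_bigr do rewrite exprM.
rewrite geom_sum; last by rewrite -exprM mulnC exprM wn expr1n.
rewrite -(prim_order_dvd hw).
have hi := ltn_ord i; have hl := ltn_ord l.
case: eqP => [->|nil].
  by rewrite addKn dvdnn.
case: ifP => // /dvdnP [m hm].
have : (0 < i + n - l < 2 * n)%N by lia.
rewrite hm; case: m hm => [|[|m]] hm; try lia.
move=> _; move: hm; rewrite mul1n => hm.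
by exfalso; apply: nil; apply: val_inj => /=; lia.
Qed.

Lemma eig_lam x : eigenvalue Amat x -> exists k : 'I_n, x = lam k.
Proof.
move=> /eigenvalueP [v hv vn0].
case: (pickP (fun k : 'I_n => x == lam k)) => [k /eqP hk|hne]; first by exists k.
exfalso.
have s0 : forall k : 'I_n, (v *m cv k) 0 0 = 0.
  move=> k.
  have : (v *m Amat *m cv k) = (x - lam k) *: (v *m cv k) + lam k *: (v *m cv k).
    by rewrite -scalerDl subrK hv scalemxAl.
  rewrite -mulmxA col_eig -scalemxAr => /eqP.
  rewrite eq_sym -subr_eq0 addrK scaler_eq0 subr_eq0 hne /= => /eqP ->.
  by rewrite mxE.
move/eqP: vn0; apply; apply/rowP => l; rewrite mxE.
have : \sum_(k < n) (v *m cv k) 0 0 * w ^+ ((n - l) * k) = 0.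
  by rewrite big1 // => k _; rewrite s0 mul0r.
under eq_bigr do rewrite mxE mulr_suml.
rewrite exchange_big /=.
under eq_bigr => i _.
  under eq_bigr => k _ do rewrite mxE -mulrA -exprD -mulnDl.
  rewrite -mulr_sumr.
  have -> : \sum_(k < n) w ^+ ((i + (n - l)) * k) = \sum_(k < n) w ^+ ((i + n - l) * k).
    by apply: eq_bigr => k _; rewrite addnBA // ltnW.
  rewrite orth.
  over.
rewrite /= (bigD1 l) //= eqxx big1 ?addr0; last first.
  by move=> i /negbTE ->; rewrite mulr0.
move/eqP; rewrite mulf_eq0 pnatr_eq0 => /orP [/eqP //|].
by rewrite eqn0Ngt n_gt0.
Qed.

End Circ.

Local Open Scope ring_scope.

Definition ZtoC (z : BinNums.Z) : algC := (int_of_Z z)%:~R.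

Lemma ZtoC_add x y : ZtoC (BinInt.Z.add x y) = ZtoC x + ZtoC y.
Proof. by rewrite /ZtoC -rmorphD; congr (_ %:~R); exact: (rmorphD int_of_Z x y). Qed.
Lemma ZtoC_mul x y : ZtoC (BinInt.Z.mul x y) = ZtoC x * ZtoC y.
Proof. by rewrite /ZtoC -rmorphM; congr (_ %:~R); exact: (rmorphM int_of_Z x y). Qed.
Lemma ZtoC_nat m : ZtoC (BinInt.Z.of_nat m) = m%:R.
Proof.
rewrite /ZtoC; case: m => [|m] //=.
by rewrite Pnat.SuccNat2Pos.id_succ.
Qed.
Lemma ZtoC_inj : injective ZtoC.
Proof. by move=> x y /intr_inj /(can_inj int_of_ZK). Qed.
Lemma ZtoC_b2z (b : bool) : ZtoC (BinInt.Z.b2z b) = if b then 1 else 0.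
Proof. by case: b. Qed.

Lemma leb_ssr a b : Nat.leb a b = (a <= b)%N.
Proof. by apply/idP/idP => [/PeanoNat.Nat.leb_le/leP|/leP/PeanoNat.Nat.leb_le]. Qed.

Lemma ZtoC_if (c : bool) x : ZtoC (if c then x else BinNums.Z0) = ZtoC x * (if c then 1 else 0).
Proof. by case: c; rewrite ?mulr1 ?mulr0. Qed.

Lemma ZtoC_evalP P a b : ZtoC (CP.evalP P a b) =
  ZtoC (CP.c00 P) + ZtoC (CP.c01 P) * ZtoC b + ZtoC (CP.c02 P) * (ZtoC b * ZtoC b)
  + ZtoC (CP.c10 P) * ZtoC a + ZtoC (CP.c11 P) * ZtoC a * ZtoC b
  + ZtoC (CP.c12 P) * ZtoC a * (ZtoC b * ZtoC b)
  + ZtoC (CP.c20 P) * (ZtoC a * ZtoC a) + ZtoC (CP.c21 P) * (ZtoC a * ZtoC a) * ZtoC b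
  + ZtoC (CP.c22 P) * (ZtoC a * ZtoC a) * (ZtoC b * ZtoC b).
Proof. by rewrite CP.evalP_expand !ZtoC_add !ZtoC_mul. Qed.

Definition sum3C (F : nat -> algC) : algC := F 0%N + F 1%N + F 2%N.

Lemma ZtoC_sum3 f : ZtoC (CP.sum3 f) = sum3C (fun a => ZtoC (f a)).
Proof. by rewrite /CP.sum3 /sum3C !ZtoC_add. Qed.

Section Main.
Variables (p q : nat).
Hypotheses (hp : prime p) (hq : prime q) (hpq : p != q).
Let n := (p ^ 2 * q ^ 2)%N.
Let n_pos : (0 < n)%N := n_gt0 hp hq.
Let w : algC := sval (C_prim_root_exists n_pos).
Let hw : n.-primitive_root w := svalP (C_prim_root_exists n_pos).

Variable D : seq nat.
Hypotheses (D1 : 1%N \in D) (Dn : n \notin D).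

Definition yD : CP.Y := (p^0*q^1 \in D, p^0*q^2 \in D, p^1*q^0 \in D, p^1*q^1 \in D,
   p^1*q^2 \in D, p^2*q^0 \in D, p^2*q^1 \in D)%N.

Lemma ybD a b : (a <= 2)%N -> (b <= 2)%N -> CP.yb yD a b = (p ^ a * q ^ b \in D)%N.
Proof.
case: a => [|[|[|a]]] // _; case: b => [|[|[|b]]] // _.
all: try by rewrite ?expn0 ?muln1 D1.
all: by rewrite (negbTE Dn).
Qed.

Definition aD (x : nat) : algC := if gcdn (x %% n) n \in D then 1 else 0.
Lemma aD_per x : aD (x + n) = aD x.
Proof. by rewrite /aD modnDr. Qed.

Lemma aD_expand m : aD m = sum3C (fun al => sum3C (fun be =>
   ZtoC (CP.ccoZ yD al be) * (if (p ^ al * q ^ be %| m)%N then 1 else 0))).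
Proof.
rewrite /aD gcdn_modl.
have gn : (gcdn m n %| n)%N := dvdn_gcdr m n.
have E := div_form hp hq hpq gn.
have li := logp_le hp hq hpq gn; have lj := logq_le hp hq hpq gn.
rewrite {1}E -ybD // -ZtoC_b2z CP.yb_expand ?leb_ssr //.
rewrite [LHS]ZtoC_sum3 [LHS]/sum3C; cbv beta.
rewrite 3![in LHS]ZtoC_sum3 /sum3C; cbv beta.
rewrite !leb_ssr !ZtoC_if !dvd_pq // !leq0n /= !mulr1; reflexivity.
Qed.

Lemma Tpq a b a' b' k : (a + a' = 2)%N -> (b + b' = 2)%N ->
  \sum_(m < n) (if (p ^ a * q ^ b %| m)%N then w ^+ (m * k) else 0) =
  if (a' <= logn p (gcdn k n))%N && (b' <= logn q (gcdn k n))%N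
  then (p ^ a' * q ^ b')%:R else 0.
Proof.
move=> ha hb.
have En : n = (p ^ a * q ^ b * (p ^ a' * q ^ b'))%N by rewrite /n mulnACA -!expnD ha hb.
have t_gt0 : (0 < p ^ a * q ^ b)%N by rewrite muln_gt0 !expn_gt0 !prime_gt0.
have tn : (p ^ a * q ^ b %| n)%N by rewrite En dvdn_mulr.
rewrite (Tsum hw k t_gt0 tn).
have -> : (n %/ (p ^ a * q ^ b) = p ^ a' * q ^ b')%N by rewrite {1}En mulKn.
have -> : (n %| p ^ a * q ^ b * k)%N = (p ^ a' * q ^ b' %| k)%N by rewrite {1}En dvdn_pmul2l.
by rewrite dvd_pq //; lia.
Qed.

Lemma lam_closed k : lam n w aD k = ZtoC (CP.evalP (CP.lamP yD (logn p (gcdn k n)) (logn q (gcdn k n)))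
   (BinInt.Z.of_nat p) (BinInt.Z.of_nat q)).
Proof.
rewrite /lam.
under eq_bigr do rewrite aD_expand /sum3C !mulrDl.
rewrite !big_split /=.
have S c t : \sum_(m < n) c * (if (t %| m)%N then 1 else 0) * w ^+ (m * k) =
   c * \sum_(m < n) (if (t %| m)%N then w ^+ (m * k) else 0).
  rewrite mulr_sumr; apply: eq_bigr => m _; case: ifP => _; by rewrite ?mulr1 ?mulr0 ?mul0r.
rewrite !S.
rewrite (@Tpq 0 0 2 2 k) // (@Tpq 0 1 2 1 k) // (@Tpq 0 2 2 0 k) // (@Tpq 1 0 1 2 k) // (@Tpq 1 1 1 1 k) //.
rewrite (@Tpq 1 2 1 0 k) // (@Tpq 2 0 0 2 k) // (@Tpq 2 1 0 1 k) // (@Tpq 2 2 0 0 k) //.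
rewrite ZtoC_evalP !ZtoC_nat.
cbn [CP.c00 CP.c01 CP.c02 CP.c10 CP.c11 CP.c12 CP.c20 CP.c21 CP.c22 CP.lamP].
rewrite /CP.cfZ; cbn [Nat.sub].
rewrite !ZtoC_if !leb_ssr !leq0n /=.
rewrite !natrM !natrX.
set i := logn p (gcdn k n); set j := logn q (gcdn k n).
case: (0 < i)%N; case: (1 < i)%N; case: (0 < j)%N; case: (1 < j)%N; rewrite /= ?mulr0 ?mulr1 ?mul0r ?mul1r ?addr0 ?add0r; ring.
Qed.

Lemma A_eq : ICG_adj n D = Amat n aD.
Proof. by apply/matrixP => i j; rewrite !mxE. Qed.

Lemma eig_value i j : (i <= 2)%N -> (j <= 2)%N ->
  eigenvalue (ICG_adj n D)
    (ZtoC (CP.evalP (CP.lamP yD i j) (BinInt.Z.of_nat p) (BinInt.Z.of_nat q))).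
Proof.
move=> hi hj.
have kn : (p ^ i * q ^ j %| n)%N by rewrite /n dvdn_mul // dvdn_exp2l.
have gk : gcdn (p ^ i * q ^ j) n = (p ^ i * q ^ j)%N by apply/gcdn_idPl.
have := lam_eig hw aD_per (p ^ i * q ^ j).
by rewrite -A_eq lam_closed gk logp_pq // logq_pq.
Qed.

Lemma value_of_eig x : eigenvalue (ICG_adj n D) x ->
  exists i j, (i <= 2)%N /\ (j <= 2)%N /\
    x = ZtoC (CP.evalP (CP.lamP yD i j) (BinInt.Z.of_nat p) (BinInt.Z.of_nat q)).
Proof.
rewrite A_eq => /(eig_lam hw aD_per) [k ->].
have gn : (gcdn k n %| n)%N := dvdn_gcdr k n.
exists (logn p (gcdn k n)), (logn q (gcdn k n)); split; first exact: logp_le gn.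
by split; [exact: logq_le gn | exact: lam_closed].
Qed.

End Main.

Lemma transferD p q (hp : prime p) (hq : prime q) (hpq : p != q) (D D' : seq nat) :
  proper_divisor_set (p ^ 2 * q ^ 2) D -> yD p q D = yD p q D' ->
  1%N \in D -> (p ^ 2 * q ^ 2)%N \notin D -> 1%N \in D' -> (p ^ 2 * q ^ 2)%N \notin D' ->
  forall x, x \in D -> x \in D'.
Proof.
move=> PD Ey D1 Dn D1' Dn' x xD.
have /andP [xn _] := PD x xD.
have E := div_form hp hq hpq xn.
have la := logp_le hp hq hpq xn; have lb := logq_le hp hq hpq xn.
move: xD; rewrite E -(ybD D1 Dn la lb) Ey (ybD D1' Dn' la lb) //.
Qed.

Lemma root_mup m (A : 'M[algC]_m) x : root (char_poly A) x = (0 < mup x (char_poly A))%N.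
Proof. by rewrite -dvdp_XsubCl XsubC_dvd // monic_neq0 // char_poly_monic. Qed.

Local Close Scope ring_scope.

Theorem lemma3p27 (p q : nat) (D1 D2 : seq nat) :
  prime p -> prime q -> (3 <= p)%N -> (p < q)%N ->
  proper_divisor_set (p ^ 2 * q ^ 2) D1 ->
  proper_divisor_set (p ^ 2 * q ^ 2) D2 ->
  1%N \in D1 -> 1%N \in D2 ->
  Spec (ICG_adj (p ^ 2 * q ^ 2) D1) = Spec (ICG_adj (p ^ 2 * q ^ 2) D2) ->
  D1 =i D2.
Proof.
move=> hp hq p3 pq P1 P2 D1in D2in HS.
have hpq : p != q by rewrite neq_ltn pq.
set n := (p ^ 2 * q ^ 2)%N.
have Dn1 : n \notin D1 by apply/negP => /P1; rewrite eqxx andbF.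
have Dn2 : n \notin D2 by apply/negP => /P2; rewrite eqxx andbF.
have eigE : forall x, eigenvalue (ICG_adj n D1) x = eigenvalue (ICG_adj n D2) x.
  move=> x; rewrite !eigenvalue_root_char !root_mup.
  by have := congr1 (fun f => f x) HS; rewrite /Spec => ->.
have op : odd p by apply/negPn/negP => /(prime_oddPn hp) p2; move: p3; rewrite p2.
have oq : odd q by apply/negPn/negP => /(prime_oddPn hq) q2; move: p3 pq; rewrite q2; lia.
have Ep := divn_eq p 2; have Eq := divn_eq q 2.
rewrite modn2 op /= in Ep; rewrite modn2 oq /= in Eq.
have cov : forall Da Db, proper_divisor_set n Da -> proper_divisor_set n Db ->
    1%N \in Da -> n \notin Da -> 1%N \in Db -> n \notin Db ->
    (forall x, eigenvalue (ICG_adj n Da) x -> eigenvalue (ICG_adj n Db) x) ->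
    CP.coversN p q (yD p q Da) (yD p q Db).
  move=> Da Db Pa Pb Da1 Dan Db1 Dbn ab e He.
  have [h1 h2] := CP.E9_le _ He.
  rewrite leb_ssr in h1; rewrite leb_ssr in h2.
  have := eig_value hp hq hpq Da1 Dan h1 h2 => /ab /(value_of_eig hp hq hpq Db1 Dbn) [i [j [hi [hj E]]]].
  exists (i, j); split.
    by apply: CP.inE9; rewrite leb_ssr.
  exact: ZtoC_inj E.
have qpp : q <> (p * p)%N.
  move=> E; have : (p %| q)%N by rewrite E dvdn_mulr.
  by rewrite dvdn_prime2 // (negbTE hpq).
have Ey : yD p q D1 = yD p q D2.
  apply: (CP.C_final p q (p %/ 2 - 1)%N (q %/ 2 - 2)%N).
  - lia.
  - lia.
  - lia.
  - exact: qpp.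
  - apply: (cov _ _ P1 P2 D1in Dn1 D2in Dn2) => x; by rewrite eigE.
  - apply: (cov _ _ P2 P1 D2in Dn2 D1in Dn1) => x; by rewrite eigE.
move=> x; apply/idP/idP.
  exact: (transferD hp hq hpq P1 Ey D1in Dn1 D2in Dn2).
exact: (transferD hp hq hpq P2 (esym Ey) D2in Dn2 D1in Dn1).
Qed.
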